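(* Let $N=2^n$. Every discrete bivariate Haar wavelet $\mathbf{h}^e_{p,q}$ satisfies $\|\nabla\mathbf{h}^e_{p,q}\|_1\le 8$.
   Context: Haar system: $H^0=\mathbf{1}_{[0,1)}$, $H^1=\mathbf{1}_{[0,1/2)}-\mathbf{1}_{[1/2,1)}$; for $e=(e_1,e_2)\in\{(0,1),(1,0),(1,1)\}$, $H^e(u,v)=H^{e_1}(u)H^{e_2}(v)$ and $H^e_{p,q}(x)=2^pH^e(2^px-q)$ for $p\ge0$, $q\in\mathbb{Z}^2\cap2^p[0,1)^2$. Identifying $\mathbf{X}\in\mathbb{C}^{N\times N}$ with the function on $[0,1)^2$ equal to $NX_{j,k}$ on $[\frac{j-1}{N},\frac jN)\times[\frac{k-1}{N},\frac kN)$, the discrete bivariate Haar wavelets $\mathbf{h}^e_{p,q}$ are the images corresponding to $H^e_{p,q}$, $0\le p\le n-1$. Discrete gradient: $\nabla\mathbf{X}$ collects all differences $X_{j+1,k}-X_{j,k}$ ($1\le j\le N-1$) and $X_{j,k+1}-X_{j,k}$ ($1\le k\le N-1$), and $\|\nabla\mathbf{X}\|_1$ is the sum of their absolute values. *)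

(* Defs.v *)
From mathcomp Require Import all_boot all_order all_algebra.
Set Implicit Arguments. Unset Strict Implicit. Unset Printing Implicit Defensive.
Import Order.TTheory GRing.Theory Num.Theory.
Local Open Scope ring_scope.

(* Univariate Haar functions: H^0 = 1_[0,1), H^1 = 1_[0,1/2) - 1_[1/2,1).
   The boolean index b encodes 0 (false) / 1 (true). *)
Definition haar1 (R : realFieldType) (b : bool) (t : R) : R :=
  if ~~ b then (if (0 <= t) && (t < 1) then 1 else 0)
  else if (0 <= t) && (t < 2^-1) then 1
  else if (2^-1 <= t) && (t < 1) then -1 else 0.

Definition haar2 (R : realFieldType) (e : bool * bool) (p q1 q2 : nat)
  (x1 x2 : R) : R :=
  2 ^+ p * haar1 e.1 (2 ^+ p * x1 - q1%:R) * haar1 e.2 (2 ^+ p * x2 - q2%:R).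

(* Discrete bivariate Haar wavelet h^e_{p,q} in R^{N x N}, N = 2^n:
   the image X with N * X_{j,k} = H^e_{p,q} on the cell
   [j/N,(j+1)/N) x [k/N,(k+1)/N) (0-indexed j,k); for p <= n-1 the function
   H^e_{p,q} is constant on each such cell, so we evaluate at its corner. *)
Definition haar_img (R : realFieldType) (n : nat) (e : bool * bool)
  (p q1 q2 : nat) : 'M[R]_(2 ^ n) :=
  \matrix_(j, k) ((2 ^ n)%:R^-1 *
     haar2 e p q1 q2 ((j : nat)%:R / (2 ^ n)%:R) ((k : nat)%:R / (2 ^ n)%:R)).

(* Entry access by natural-number indices (0 outside the range). *)
Definition mxat (R : realFieldType) (N : nat) (A : 'M[R]_N) (j k : nat) : R :=
  match @insub _ (fun i => i < N)%N 'I_N j, @insub _ (fun i => i < N)%N 'I_N k with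
  | Some j', Some k' => A j' k'
  | _, _ => 0
  end.

Definition grad_l1 (R : realFieldType) (N : nat) (A : 'M[R]_N) : R :=
  \sum_(0 <= j < N.-1) \sum_(0 <= k < N) `|mxat A j.+1 k - mxat A j k|
  + \sum_(0 <= j < N) \sum_(0 <= k < N.-1) `|mxat A j k.+1 - mxat A j k|.

(* Main.v *)
Require Import Defs.
From mathcomp Require Import all_boot all_order all_algebra.
From mathcomp Require Import zify ring lra.
Import Order.TTheory GRing.Theory Num.Theory.
Local Open Scope ring_scope.

Section S.
Variable R : realFieldType.

Definition step (t j : nat) : R := (t <= j)%N%:R.

Definition Fv (b : bool) (q h j : nat) : R :=
  step (q * (2 * h)) j - 2 * step (if b then q * (2 * h) + h else q * (2 * h) + 2 * h) j
  + step (q * (2 * h) + 2 * h) j.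

Lemma sum_dstep t M : \sum_(0 <= j < M) `|step t j.+1 - step t j| <= 1.
Proof.
rewrite (eq_bigr (fun j => step t j.+1 - step t j)); last first.
  move=> j _; apply: ger0_norm; rewrite subr_ge0 /step ler_nat.
  by case: (leqP t j) => H //=; have -> : (t <= j.+1)%N by lia.
rewrite telescope_sumr // /step.
case: (t <= M)%N; case: (t <= 0)%N => /=; lra.
Qed.

Lemma sum_dF b q h M : \sum_(0 <= j < M) `|Fv b q h j.+1 - Fv b q h j| <= 4.
Proof.
pose t0 := q * (2 * h); pose t1 := (if b then q * (2 * h) + h else q * (2 * h) + 2 * h); pose t2 := t0 + 2 * h.
apply: le_trans (_ : \sum_(0 <= j < M) (`|step t0 j.+1 - step t0 j|
   + 2 * `|step t1 j.+1 - step t1 j| + `|step t2 j.+1 - step t2 j|) <= 4).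
  apply: ler_sum => j _; rewrite /Fv -/t0 -/t1 -/t2.
  set a := step t0 j.+1 - step t0 j; set c := step t1 j.+1 - step t1 j;
  set d := step t2 j.+1 - step t2 j.
  have -> : step t0 j.+1 - 2 * step t1 j.+1 + step t2 j.+1 -
    (step t0 j - 2 * step t1 j + step t2 j) = a - 2 * c + d by rewrite /a /c /d; ring.
  apply: le_trans (ler_normD _ _) _; rewrite lerD2r.
  apply: le_trans (ler_normB _ _) _; rewrite normrM ger0_norm //.
rewrite !big_split /= -mulr_sumr.
have := sum_dstep t0 M; have := sum_dstep t1 M; have := sum_dstep t2 M. lra.
Qed.

Lemma sum_ind t0 t2 M : (t0 <= t2)%N ->
  (\sum_(0 <= k < M) ((t0 <= k) && (k < t2))%N)%N = (minn M t2 - minn M t0)%N.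
Proof.
move=> H; elim: M => [|M IH]; first by rewrite big_mkord big_ord0 minnC /minn.
rewrite big_nat_recr //= IH.
case: (leqP t0 M) => H1; case: (leqP t2 M) => H2 /=.
all: lia.
Qed.

Lemma absF b q h k : `|Fv b q h k| <= ((q * (2*h) <= k) && (k < q * (2 * h) + 2 * h))%N%:R.
Proof.
rewrite /Fv /step; set a := q * (2 * h).
case: b.
  case: (leqP a k) => H1; case: (leqP (a + h) k) => H2; case: (leqP (a + 2 * h) k) => H3 /=;
  rewrite ?mulr0 ?mulr1 ?subr0 ?addr0 ?normr0 ?normr1 ?normrN ?ler01 //; try lia.
  all: try (rewrite (_ : 1 - 2 + 1 = 0 :> R); [by rewrite normr0 | ring]).
  all: try (rewrite (_ : 1 - 2 = -1 :> R); [by rewrite normrN normr1 | ring]).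
  all: try (rewrite (_ : 0 - 2 + 1 = -1 :> R); [by rewrite normrN normr1 | ring]).
  all: try lia.
case: (leqP a k) => H1; case: (leqP (a + 2 * h) k) => H3 /=;
  rewrite ?mulr0 ?mulr1 ?subr0 ?addr0 ?normr0 ?normr1 ?normrN ?ler01 //; try lia.
all: try (rewrite (_ : 1 - 2 + 1 = 0 :> R); [by rewrite normr0 | ring]).
all: try (rewrite (_ : 0 - 2 + 1 = -1 :> R); [by rewrite normrN normr1 | ring]).
all: lia.
Qed.


Lemma sum_absF b q h M : \sum_(0 <= k < M) `|Fv b q h k| <= (2 * h)%N%:R.
Proof.
apply: le_trans (ler_sum _ (fun k _ => absF b q h k)) _.
rewrite -natr_sum sum_ind; last by lia.
rewrite ler_nat; lia.
Qed.

Lemma factor (c : R) (F G : nat -> R) M1 M2 : 0 <= c ->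
  \sum_(0 <= j < M1) \sum_(0 <= k < M2) `|c * F j.+1 * G k - c * F j * G k|
  = c * ((\sum_(0 <= j < M1) `|F j.+1 - F j|) * \sum_(0 <= k < M2) `|G k|).
Proof.
move=> c0; rewrite mulr_suml mulr_sumr; apply: eq_bigr => j _.
rewrite mulr_sumr mulr_sumr; apply: eq_bigr => k _.
have -> : c * F j.+1 * G k - c * F j * G k = c * ((F j.+1 - F j) * G k) by ring.
by rewrite normrM normrM (ger0_norm c0).
Qed.

Lemma factor2 (c : R) (F G : nat -> R) M1 M2 : 0 <= c ->
  \sum_(0 <= j < M1) \sum_(0 <= k < M2) `|c * F j * G k.+1 - c * F j * G k|
  = c * ((\sum_(0 <= k < M2) `|G k.+1 - G k|) * \sum_(0 <= j < M1) `|F j|).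
Proof.
move=> c0; rewrite [_ * \sum_(0 <= j < M1) _]mulrC mulr_suml mulr_sumr; apply: eq_bigr => j _.
rewrite mulr_sumr mulr_sumr; apply: eq_bigr => k _.
have -> : c * F j * G k.+1 - c * F j * G k = c * (F j * (G k.+1 - G k)) by ring.
by rewrite normrM normrM (ger0_norm c0) [`|F j| * _]mulrC.
Qed.

Lemma haar1_Fv b q h k : (0 < h)%N ->
  haar1 b ((k%:R - (q * (2 * h))%N%:R) / (2 * h)%N%:R) = Fv b q h k.
Proof.
move=> h0; set a := q * (2 * h); set x := (_ / _).
have s0 : 0 < (2 * h)%N%:R :> R by rewrite ltr0n; lia.
have E0 : (0 <= x) = (a <= k)%N.
  by rewrite /x ler_pdivlMr // mul0r subr_ge0 ler_nat.
have E1 : (x < 1) = (k < a + 2 * h)%N.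
  by rewrite /x ltr_pdivrMr // mul1r ltrBlDr -natrD ltr_nat addnC.
have E2 : (x < 2^-1) = (k < a + h)%N.
  rewrite /x ltr_pdivrMr // ltrBlDr natrM mulrA mulVf ?pnatr_eq0 // mul1r.
  by rewrite -natrD ltr_nat addnC.
have E3 : (2^-1 <= x) = (a + h <= k)%N by rewrite leNgt E2 -leqNgt.
rewrite /haar1 E0 E1; case: b => /=; last first.
  rewrite /Fv /step -/a.
  case: (leqP a k) => H1; case: (leqP (a + 2 * h) k) => H3 /=; try lia;
  rewrite ?mulr0 ?mulr1 ?subr0 ?addr0 //; ring.
rewrite E2 E3 /Fv /step -/a.
case: (leqP a k) => H1; case: (leqP (a + h) k) => H2; case: (leqP (a + 2 * h) k) => H3 /=; try lia;
  rewrite ?mulr0 ?mulr1 ?subr0 ?addr0 //; ring.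
Qed.


End S.

Theorem lemma10 (R : realFieldType) (n : nat) (e : bool * bool)
  (he : e != (false, false)) (p q1 q2 : nat)
  (hp : (p < n)%N) (hq1 : (q1 < 2 ^ p)%N) (hq2 : (q2 < 2 ^ p)%N) :
  grad_l1 (haar_img R n e p q1 q2) <= 8.
Proof.
pose h := (2 ^ (n - p.+1))%N.
have h0 : (0 < h)%N by rewrite expn_gt0.
have hN : (2 ^ n = 2 ^ p * (2 * h))%N.
  by rewrite /h -expnS -expnD; congr expn; lia.
pose S : R := (2 * h)%N%:R.
have S0 : 0 < S by rewrite ltr0n; lia.
pose c := S^-1.
have c0 : 0 <= c by rewrite invr_ge0 ltW.
have Hm : forall j k, (j < 2 ^ n)%N -> (k < 2 ^ n)%N ->
   mxat (haar_img R n e p q1 q2) j k = c * Fv R e.1 q1 h j * Fv R e.2 q2 h k.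
  move=> j k Hj Hk; rewrite /mxat.
  case: insubP => [j' _ Ej|/negP //]; case: insubP => [k' _ Ek|/negP //].
  rewrite mxE Ej Ek /haar2.
  have P0 : (2 ^ p)%N%:R != 0 :> R by rewrite pnatr_eq0 -lt0n expn_gt0.
  have S0' : S != 0 by rewrite gt_eqF.
  have arg : forall (i q : nat), 2 ^+ p * (i%:R / (2 ^ n)%N%:R) - q%:R
      = (i%:R - (q * (2 * h))%N%:R) / (2 * h)%N%:R :> R.
    move=> i q; rewrite hN natrM natrX -/S natrM -natrX.
    by field; rewrite !pnatr_eq0 -!lt0n ?expn_gt0 ?h0.
  rewrite !arg !haar1_Fv // /c hN natrM -natrX -/S.
  by field; rewrite !pnatr_eq0 -!lt0n ?expn_gt0 ?h0.
have Hsum1 : \sum_(0 <= j < (2 ^ n).-1) \sum_(0 <= k < 2 ^ n)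
    `|mxat (haar_img R n e p q1 q2) j.+1 k - mxat (haar_img R n e p q1 q2) j k|
    = \sum_(0 <= j < (2 ^ n).-1) \sum_(0 <= k < 2 ^ n)
    `|c * Fv R e.1 q1 h j.+1 * Fv R e.2 q2 h k - c * Fv R e.1 q1 h j * Fv R e.2 q2 h k|.
  apply: eq_big_nat => j /andP[_ Hj]; apply: eq_big_nat => k /andP[_ Hk].
  have Hn : (0 < 2 ^ n)%N by rewrite expn_gt0.
  rewrite !Hm //; lia.
have Hsum2 : \sum_(0 <= j < 2 ^ n) \sum_(0 <= k < (2 ^ n).-1)
    `|mxat (haar_img R n e p q1 q2) j k.+1 - mxat (haar_img R n e p q1 q2) j k|
    = \sum_(0 <= j < 2 ^ n) \sum_(0 <= k < (2 ^ n).-1)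
    `|c * Fv R e.1 q1 h j * Fv R e.2 q2 h k.+1 - c * Fv R e.1 q1 h j * Fv R e.2 q2 h k|.
  apply: eq_big_nat => j /andP[_ Hj]; apply: eq_big_nat => k /andP[_ Hk].
  have Hn : (0 < 2 ^ n)%N by rewrite expn_gt0.
  rewrite !Hm //; lia.
rewrite /grad_l1 Hsum1 Hsum2 factor // factor2 //.
have cS : c * S = 1 by rewrite /c mulVf // gt_eqF.
have B1 := sum_dF R e.1 q1 h (2 ^ n).-1.
have B2 := sum_dF R e.2 q2 h (2 ^ n).-1.
have B3 := sum_absF R e.2 q2 h (2 ^ n).
have B4 := sum_absF R e.1 q1 h (2 ^ n).
have G1 : 0 <= \sum_(0 <= j < (2 ^ n).-1) `|Fv R e.1 q1 h j.+1 - Fv R e.1 q1 h j|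
  by apply: sumr_ge0.
have G2 : 0 <= \sum_(0 <= j < (2 ^ n).-1) `|Fv R e.2 q2 h j.+1 - Fv R e.2 q2 h j|
  by apply: sumr_ge0.
have G3 : 0 <= \sum_(0 <= j < 2 ^ n) `|Fv R e.2 q2 h j| by apply: sumr_ge0.
have G4 : 0 <= \sum_(0 <= j < 2 ^ n) `|Fv R e.1 q1 h j| by apply: sumr_ge0.
have M1 := ler_pM G1 G3 B1 B3.
have M2 := ler_pM G2 G4 B2 B4.
have := ler_wpM2l c0 M1; have := ler_wpM2l c0 M2.
rewrite -/S. nra.
Qed.
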